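(* Let $S\ge 2$ and $\alpha_1,\dots,\alpha_S>0$. As $n\to\infty$ through values with $m_j=\alpha_j n$ positive integers for all $j$, and with $M=m_1+\dots+m_S$, $$B(m_1,\dots,m_S)\sim\frac{m_1\cdots m_S}{(M-m_1)\cdots(M-m_S)}\cdot\frac{M!}{m_1!\cdots m_S!}.$$
   Context: For positive integers $m_1,\dots,m_S$, $B(m_1,\dots,m_S)=\sum_{\ell_1=0}^{m_1-1}\cdots\sum_{\ell_S=0}^{m_S-1}\frac{(\ell_1+\dots+\ell_S)!}{\ell_1!\cdots\ell_S!}$; equivalently $B(m_1,\dots,m_S)=\sum_{k_1=1}^{m_1}\cdots\sum_{k_S=1}^{m_S}\binom{m_1}{k_1}\cdots\binom{m_S}{k_S}E(k_1-1,\dots,k_S-1)$ where $E$ is the block derangement number. *)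

(* Defs.v *)
From Stdlib Require Import Reals List Arith.
Import ListNotations.
Open Scope R_scope.

Fixpoint tuples (ms : list nat) : list (list nat) :=
  match ms with
  | [] => [[]]
  | m :: ms' => flat_map (fun l => map (cons l) (tuples ms')) (seq 0 m)
  end.

Definition Rsum (xs : list R) : R := fold_right Rplus 0 xs.
Definition Rprod (xs : list R) : R := fold_right Rmult 1 xs.

Definition multinom (ls : list nat) : R :=
  INR (fact (list_sum ls)) / Rprod (map (fun l => INR (fact l)) ls).

Definition B (ms : list nat) : R := Rsum (map multinom (tuples ms)).

Definition Bapprox (ms : list nat) : R :=
  let M := list_sum ms in
  Rprod (map INR ms) / Rprod (map (fun m => INR M - INR m) ms)
  * (INR (fact M) / Rprod (map (fun m => INR (fact m)) ms)).

(* Main.v *)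
Require Import Defs.
From Stdlib Require Import Reals List Arith Lia Lra.
Import ListNotations.
Open Scope R_scope.

Definition rs (f : nat -> R) (n : nat) : R := Rsum (map f (seq 0 n)).
Fixpoint pg (g : nat -> nat -> R) (l ms : list nat) : R :=
  match l, ms with x :: l', m :: ms' => g x m * pg g l' ms' | _, _ => 1 end.
Fixpoint inbox (lo : nat -> nat) (l ms : list nat) : Prop :=
  match l, ms with
  | [], [] => True
  | x :: l', m :: ms' => (lo m <= x < m)%nat /\ inbox lo l' ms'
  | _, _ => False end.

Lemma Rsum_app a b : Rsum (a ++ b) = Rsum a + Rsum b.
Proof. induction a; simpl; [lra|]. unfold Rsum in *; simpl. rewrite IHa. lra. Qed.

Lemma Rsum_plus {A} (f g : A -> R) l :
  Rsum (map (fun x => f x + g x) l) = Rsum (map f l) + Rsum (map g l).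
Proof. induction l; unfold Rsum in *; simpl; [lra|]. rewrite IHl. lra. Qed.

Lemma Rsum_scal {A} (c : R) (f : A -> R) l :
  Rsum (map (fun x => c * f x) l) = c * Rsum (map f l).
Proof. induction l; unfold Rsum in *; simpl; [lra|]. rewrite IHl. lra. Qed.

Lemma Rsum_scal_r {A} (c : R) (f : A -> R) l :
  Rsum (map (fun x => f x * c) l) = Rsum (map f l) * c.
Proof. induction l; unfold Rsum in *; simpl; [lra|]. rewrite IHl. lra. Qed.

Lemma Rsum_ext {A} (f g : A -> R) l : (forall x, In x l -> f x = g x) ->
  Rsum (map f l) = Rsum (map g l).
Proof. intro H. f_equal. apply map_ext_in. auto. Qed.

Lemma Rsum_le {A} (f g : A -> R) l : (forall x, In x l -> f x <= g x) ->
  Rsum (map f l) <= Rsum (map g l).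
Proof.
  induction l; intro H; unfold Rsum in *; simpl; [lra|].
  apply Rplus_le_compat; auto with datatypes.
Qed.

Lemma Rsum_flat_map {A B} (F : B -> R) (G : A -> list B) s :
  Rsum (map F (flat_map G s)) = Rsum (map (fun x => Rsum (map F (G x))) s).
Proof.
  induction s; simpl; [reflexivity|]. rewrite map_app, Rsum_app, IHs.
  unfold Rsum; simpl; reflexivity.
Qed.

Lemma Rsum_swap {A B} (F : A -> B -> R) s T :
  Rsum (map (fun x => Rsum (map (fun l => F x l) T)) s) =
  Rsum (map (fun l => Rsum (map (fun x => F x l) s)) T).
Proof.
  induction s; simpl.
  - unfold Rsum; simpl. induction T; simpl; [reflexivity|]. rewrite <- IHT. lra.
  - unfold Rsum at 1; simpl. fold (Rsum (map (fun x => Rsum (map (fun l => F x l) T)) s)).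
    rewrite IHs.
    rewrite <- Rsum_plus. apply Rsum_ext. intros. unfold Rsum; simpl. reflexivity.
Qed.

Lemma rs_S f n : rs f (S n) = rs f n + f n.
Proof. unfold rs. rewrite seq_S, map_app, Rsum_app. unfold Rsum; simpl. lra. Qed.

Lemma tuples_pg g ms :
  Rsum (map (fun l => pg g l ms) (tuples ms)) = Rprod (map (fun m => rs (fun x => g x m) m) ms).
Proof.
  induction ms as [|m ms IH]; simpl.
  - unfold Rsum, Rprod; simpl. lra.
  - rewrite Rsum_flat_map. unfold Rprod; simpl; fold (Rprod (map (fun m => rs (fun x => g x m) m) ms)).
    rewrite <- IH. unfold rs. rewrite <- Rsum_scal_r. apply Rsum_ext. intros x _.
    rewrite map_map. simpl. apply Rsum_scal.
Qed.

Lemma tuples_inbox ms l : In l (tuples ms) -> inbox (fun _ => 0%nat) l ms.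
Proof.
  revert l; induction ms as [|m ms IH]; intros l H; simpl in H.
  - destruct H as [<-|[]]. simpl. auto.
  - apply in_flat_map in H. destruct H as [x [Hx Hl]]. apply in_map_iff in Hl.
    destruct Hl as [l' [<- Hl']]. apply in_seq in Hx. simpl. split; [lia|]. auto.
Qed.

(* hockey stick *)
Lemma hs m L : rs (fun x => INR (fact (x + L)) / INR (fact x)) (S m) =
  INR (fact (L + S m)) / (INR (fact m) * INR (L + 1)).
Proof.
  induction m.
  - unfold rs, Rsum; simpl. replace (L + 1)%nat with (S L) by lia.
    replace (fact (S L)) with (S L * fact L)%nat by reflexivity.
    rewrite mult_INR, S_INR. pose proof (INR_fact_neq_0 L). pose proof (pos_INR L).
    field. lra.
  - rewrite rs_S, IHm.
    replace (L + S (S m))%nat with (S (L + S m)) by lia.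
    replace (S m + L)%nat with (L + S m)%nat by lia.
    change (fact (S (L + S m))) with (S (L + S m) * fact (L + S m))%nat.
    change (fact (S m)) with (S m * fact m)%nat.
    rewrite !mult_INR. 
    replace (INR (S (L + S m))) with (INR L + INR m + 2) by (rewrite S_INR, plus_INR, S_INR; ring).
    replace (INR (S m)) with (INR m + 1) by (rewrite S_INR; ring).
    replace (INR (L + 1)) with (INR L + 1) by (rewrite plus_INR; simpl; ring).
    pose proof (INR_fact_neq_0 m). pose proof (INR_fact_neq_0 (L + S m)).
    pose proof (pos_INR L). pose proof (pos_INR m).
    field. lra.
Qed.

Definition Phi (m0 L : nat) : R := INR (fact (L + m0)) / (INR (fact (m0 - 1)) * INR (L + 1)).
Definition dfact (l : list nat) : R := Rprod (map (fun x => INR (fact x)) l).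
Definition psi (Ph : nat -> R) (E : nat) (l : list nat) : R := Ph (E + list_sum l)%nat / dfact l.

Lemma B_hs m0 ms : (1 <= m0)%nat -> B (m0 :: ms) = Rsum (map (psi (Phi m0) 0) (tuples ms)).
Proof.
  intro H. unfold B. simpl tuples. rewrite Rsum_flat_map.
  rewrite (Rsum_ext _ (fun x => Rsum (map (fun l => multinom (x :: l)) (tuples ms)))).
  2:{ intros. rewrite map_map. reflexivity. }
  rewrite Rsum_swap. apply Rsum_ext. intros l _.
  rewrite (Rsum_ext _ (fun x => (INR (fact (x + list_sum l)) / INR (fact x)) * / dfact l)).
  2:{ intros x _. unfold multinom, dfact. simpl. unfold Rprod at 1. simpl.
      fold (Rprod (map (fun x => INR (fact x)) l)). unfold Rdiv. rewrite Rinv_mult. ring. }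
  rewrite Rsum_scal_r. destruct m0 as [|m]; [lia|].
  fold (rs (fun x => INR (fact (x + list_sum l)) / INR (fact x)) (S m)). rewrite hs.
  unfold psi, Phi. replace (S m - 1)%nat with m by lia. simpl (0 + _)%nat.
  unfold Rdiv. ring.
Qed.

Definition sumf (f : nat -> nat) (ms : list nat) := list_sum (map f ms).

Lemma dfact_pos l : 0 < dfact l.
Proof.
  induction l; unfold dfact, Rprod in *; simpl; [lra|].
  apply Rmult_lt_0_compat; auto. apply INR_fact_lt_0.
Qed.

Lemma pg_nonneg g l ms : (forall x m, 0 <= g x m) -> 0 <= pg g l ms.
Proof.
  intro H; revert ms; induction l; destruct ms; simpl; try lra.
  apply Rmult_le_pos; auto.
Qed.

Lemma inbox_sums lo l ms : inbox lo l ms ->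
  (sumf lo ms <= list_sum l /\ list_sum l <= sumf pred ms)%nat.
Proof.
  revert ms; induction l; destruct ms; simpl; try tauto.
  - intros _. unfold sumf; simpl. lia.
  - intros [H1 H2]. apply IHl in H2. unfold sumf in *; simpl. lia.
Qed.

Lemma psi_cons Ph E x l : psi Ph E (x :: l) = psi Ph (E + x) l / INR (fact x).
Proof.
  unfold psi, dfact, Rprod. simpl. fold (Rprod (map (fun x => INR (fact x)) l)).
  replace (E + (x + list_sum l))%nat with (E + x + list_sum l)%nat by lia.
  unfold Rdiv. rewrite Rinv_mult. ring.
Qed.

Lemma fact_S_INR x : INR (fact (S x)) = INR (S x) * INR (fact x).
Proof. change (fact (S x)) with (S x * fact x)%nat. apply mult_INR. Qed.

Lemma head_up (Ph : nat -> R) (U : R) (E lo m : nat) :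
  (forall t, (lo <= t)%nat -> (S t < m)%nat -> Ph (E + t)%nat * INR (S t) <= U * Ph (E + S t)%nat) ->
  0 <= U -> (forall K, 0 <= Ph K) ->
  forall d x, (lo <= x < m)%nat -> (m - 1 - x = d)%nat ->
  Ph (E + x)%nat / INR (fact x) <= U ^ d * (Ph (E + (m-1))%nat / INR (fact (m-1))).
Proof.
  intros Hs HU HP d. induction d; intros x Hx Hd.
  - replace (m - 1)%nat with x by lia. simpl. lra.
  - assert (Hx1 : (lo <= S x < m)%nat) by lia.
    specialize (IHd (S x) Hx1 ltac:(lia)).
    specialize (Hs x ltac:(lia) ltac:(lia)).
    rewrite fact_S_INR in IHd.
    pose proof (INR_fact_lt_0 x). assert (0 < INR (S x)) by (apply lt_0_INR; lia).
    simpl pow.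
    apply Rle_trans with (U * (Ph (E + S x)%nat / (INR (S x) * INR (fact x)))).
    + apply (Rmult_le_reg_r (INR (S x) * INR (fact x))). nra.
      field_simplify; try lra. 
    + rewrite Rmult_assoc. apply Rmult_le_compat_l; auto.
Qed.

Lemma path_up Ph lo (U : nat -> R) Lmin Lmax : (forall K, 0 <= Ph K) -> (forall m, 0 <= U m) ->
  forall ms, (forall K t m, In m ms -> (lo m <= t)%nat -> (S t < m)%nat -> (t <= K)%nat ->
                (Lmin <= S K)%nat -> (S K <= Lmax)%nat ->
                Ph K * INR (S t) <= U m * Ph (S K)) ->
  forall E l, inbox lo l ms -> (Lmin <= E + sumf lo ms + 1)%nat -> (E + sumf pred ms <= Lmax)%nat ->
  psi Ph E l <= pg (fun x m => U m ^ (m - 1 - x)) l ms * psi Ph E (map pred ms).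
Proof.
  intros HP HU ms. induction ms as [|m ms IH]; intros Hs E l Hb H1 H2.
  - destruct l; simpl in Hb; [|tauto]. simpl. lra.
  - destruct l as [|x l]; simpl in Hb; [tauto|]. destruct Hb as [Hx Hb].
    pose proof (inbox_sums _ _ _ Hb) as [Hs1 Hs2].
    unfold sumf in H1, H2; simpl in H1, H2. fold (sumf lo ms) in H1. fold (sumf pred ms) in H2.
    assert (IH' := IH (fun K t m' Hm => Hs K t m' (or_intror Hm)) (E + x)%nat l Hb ltac:(lia) ltac:(lia)).
    rewrite psi_cons. simpl map. rewrite psi_cons. simpl pg.
    assert (Hh := head_up Ph (U m) (E + sumf pred ms) (lo m) m).
    assert (Hh' : forall t, (lo m <= t)%nat -> (S t < m)%nat ->
      Ph (E + sumf pred ms + t)%nat * INR (S t) <= U m * Ph (E + sumf pred ms + S t)%nat).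
    { intros t Ht1 Ht2. replace (E + sumf pred ms + S t)%nat with (S (E + sumf pred ms + t)) by lia.
      apply Hs; auto with datatypes; lia. }
    specialize (Hh Hh' (HU m) HP (m - 1 - x)%nat x Hx eq_refl).
    unfold psi in *.
    replace (E + x + list_sum (map Init.Nat.pred ms))%nat with (E + sumf pred ms + x)%nat in IH' by (unfold sumf; lia).
    replace (E + Init.Nat.pred m + list_sum (map Init.Nat.pred ms))%nat with (E + sumf pred ms + (m-1))%nat by (unfold sumf; lia).
    replace (Init.Nat.pred m) with (m - 1)%nat by lia.
    set (pg' := pg (fun x0 m0 : nat => U m0 ^ (m0 - 1 - x0)) l ms) in *.
    assert (0 <= pg') by (apply pg_nonneg; intros; apply pow_le; auto).
    pose proof (dfact_pos (map Init.Nat.pred ms)). pose proof (INR_fact_lt_0 x).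
    pose proof (INR_fact_lt_0 (m-1)).
    set (dt := dfact (map Init.Nat.pred ms)) in *.
    apply Rle_trans with (pg' * (Ph (E + sumf pred ms + x)%nat / dt) / INR (fact x)).
    { unfold Rdiv. apply Rmult_le_compat_r; [left; apply Rinv_0_lt_compat; lra| exact IH']. }
    apply Rle_trans with (pg' / dt * (Ph (E + sumf pred ms + x)%nat / INR (fact x))).
    { right. field. lra. }
    apply Rle_trans with (pg' / dt * (U m ^ (m - 1 - x) * (Ph (E + sumf pred ms + (m - 1))%nat / INR (fact (m - 1))))).
    { apply Rmult_le_compat_l; auto. unfold Rdiv; apply Rmult_le_pos; auto. left; apply Rinv_0_lt_compat; lra. }
    right. field. lra.
Qed.

Lemma head_lo (Ph : nat -> R) (U : R) (E lo m : nat) :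
  (forall t, (lo <= t)%nat -> (S t < m)%nat -> U * Ph (E + S t)%nat <= Ph (E + t)%nat * INR (S t)) ->
  0 <= U -> (forall K, 0 <= Ph K) ->
  forall d x, (lo <= x < m)%nat -> (m - 1 - x = d)%nat ->
  U ^ d * (Ph (E + (m-1))%nat / INR (fact (m-1))) <= Ph (E + x)%nat / INR (fact x).
Proof.
  intros Hs HU HP d. induction d; intros x Hx Hd.
  - replace (m - 1)%nat with x by lia. simpl. lra.
  - assert (Hx1 : (lo <= S x < m)%nat) by lia.
    specialize (IHd (S x) Hx1 ltac:(lia)).
    specialize (Hs x ltac:(lia) ltac:(lia)).
    rewrite fact_S_INR in IHd.
    pose proof (INR_fact_lt_0 x). assert (0 < INR (S x)) by (apply lt_0_INR; lia).
    simpl pow.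
    apply Rle_trans with (U * (Ph (E + S x)%nat / (INR (S x) * INR (fact x)))).
    + rewrite Rmult_assoc. apply Rmult_le_compat_l; auto.
    + apply (Rmult_le_reg_r (INR (S x) * INR (fact x))). nra.
      field_simplify; try lra.
Qed.

Lemma path_lo Ph lo (U : nat -> R) Lmin Lmax : (forall K, 0 <= Ph K) -> (forall m, 0 <= U m) ->
  forall ms, (forall K t m, In m ms -> (lo m <= t)%nat -> (S t < m)%nat -> (t <= K)%nat ->
                (Lmin <= S K)%nat -> (S K <= Lmax)%nat ->
                U m * Ph (S K) <= Ph K * INR (S t)) ->
  forall E l, inbox lo l ms -> (Lmin <= E + sumf lo ms + 1)%nat -> (E + sumf pred ms <= Lmax)%nat ->
  pg (fun x m => U m ^ (m - 1 - x)) l ms * psi Ph E (map pred ms) <= psi Ph E l.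
Proof.
  intros HP HU ms. induction ms as [|m ms IH]; intros Hs E l Hb H1 H2.
  - destruct l; simpl in Hb; [|tauto]. simpl. lra.
  - destruct l as [|x l]; simpl in Hb; [tauto|]. destruct Hb as [Hx Hb].
    pose proof (inbox_sums _ _ _ Hb) as [Hs1 Hs2].
    unfold sumf in H1, H2; simpl in H1, H2. fold (sumf lo ms) in H1. fold (sumf pred ms) in H2.
    assert (IH' := IH (fun K t m' Hm => Hs K t m' (or_intror Hm)) (E + x)%nat l Hb ltac:(lia) ltac:(lia)).
    rewrite psi_cons. simpl map. rewrite psi_cons. simpl pg.
    assert (Hh := head_lo Ph (U m) (E + sumf pred ms) (lo m) m).
    assert (Hh' : forall t, (lo m <= t)%nat -> (S t < m)%nat ->
      U m * Ph (E + sumf pred ms + S t)%nat <= Ph (E + sumf pred ms + t)%nat * INR (S t)).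
    { intros t Ht1 Ht2. replace (E + sumf pred ms + S t)%nat with (S (E + sumf pred ms + t)) by lia.
      apply Hs; auto with datatypes; lia. }
    specialize (Hh Hh' (HU m) HP (m - 1 - x)%nat x Hx eq_refl).
    unfold psi in *.
    replace (E + x + list_sum (map Init.Nat.pred ms))%nat with (E + sumf pred ms + x)%nat in IH' by (unfold sumf; lia).
    replace (E + Init.Nat.pred m + list_sum (map Init.Nat.pred ms))%nat with (E + sumf pred ms + (m-1))%nat by (unfold sumf; lia).
    replace (Init.Nat.pred m) with (m - 1)%nat by lia.
    set (pg' := pg (fun x0 m0 : nat => U m0 ^ (m0 - 1 - x0)) l ms) in *.
    assert (0 <= pg') by (apply pg_nonneg; intros; apply pow_le; auto).
    pose proof (dfact_pos (map Init.Nat.pred ms)). pose proof (INR_fact_lt_0 x).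
    pose proof (INR_fact_lt_0 (m-1)).
    set (dt := dfact (map Init.Nat.pred ms)) in *.
    apply Rle_trans with (pg' * (Ph (E + sumf pred ms + x)%nat / dt) / INR (fact x)).
    2:{ unfold Rdiv. apply Rmult_le_compat_r; [left; apply Rinv_0_lt_compat; lra| exact IH']. }
    apply Rle_trans with (pg' / dt * (Ph (E + sumf pred ms + x)%nat / INR (fact x))).
    2:{ right. field. lra. }
    apply Rle_trans with (pg' / dt * (U m ^ (m - 1 - x) * (Ph (E + sumf pred ms + (m - 1))%nat / INR (fact (m - 1))))).
    2:{ apply Rmult_le_compat_l; auto. unfold Rdiv; apply Rmult_le_pos; auto. left; apply Rinv_0_lt_compat; lra. }
    right. field. lra.
Qed.

Lemma Phi_step m0 K : (1 <= m0)%nat ->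
  Phi m0 K * ((INR K + 1) * (INR K + 1 + INR m0)) = Phi m0 (S K) * (INR K + 2).
Proof.
  intro H. unfold Phi. replace (S K + m0)%nat with (S (K + m0)) by lia.
  rewrite fact_S_INR. rewrite !plus_INR, !S_INR, plus_INR. simpl INR.
  pose proof (INR_fact_lt_0 (m0 - 1)). pose proof (pos_INR K). field. lra.
Qed.

Lemma Phi_nonneg m0 K : 0 <= Phi m0 K.
Proof.
  unfold Phi. pose proof (INR_fact_lt_0 (K + m0)). pose proof (INR_fact_lt_0 (m0 - 1)).
  assert (0 < INR (K + 1)) by (apply lt_0_INR; lia).
  apply Rlt_le, Rdiv_lt_0_compat; [lra|]. nra.
Qed.

Lemma ratio_glob l L m m0 : 1 <= l -> l <= L -> l + 1 <= m -> 1 <= m0 ->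
  l * (L + 1) / (L * (L + m0)) <= m / (m + m0 - 1).
Proof.
  intros. apply Rle_trans with ((l + 1) / (l + m0)).
  - apply (Rmult_le_reg_r (L * (L + m0) * (l + m0))). apply Rmult_lt_0_compat; nra.
    field_simplify; try nra.
    assert (0 <= (L - l) * (l * L + L + l + m0)) by (apply Rmult_le_pos; nra). nra.
  - apply (Rmult_le_reg_r ((l + m0) * (m + m0 - 1))). apply Rmult_lt_0_compat; nra.
    assert (0 <= (m - l - 1) * (m0 - 1)) by (apply Rmult_le_pos; nra).
    field_simplify; try nra.
Qed.

Lemma ratio_corner l L Lam m m0 : 0 <= l -> l <= m -> 1 <= Lam -> Lam <= L -> 1 <= m0 ->
  l * (L + 1) / (L * (L + m0)) <= m * (Lam + 1) / (Lam * (Lam + m0)).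
Proof.
  intros. apply (Rmult_le_reg_r (L * (L + m0) * (Lam * (Lam + m0)))).
  repeat apply Rmult_lt_0_compat; nra.
  field_simplify; try nra.
  assert (0 <= (L - Lam) * (L * Lam + L + Lam + m0)) by (apply Rmult_le_pos; nra).
  assert (l * ((L+1) * (Lam * (Lam + m0))) <= m * ((Lam + 1) * (L * (L + m0)))).
  { apply Rle_trans with (m * ((L+1) * (Lam * (Lam + m0)))).
    apply Rmult_le_compat_r; [|lra]. apply Rmult_le_pos; [lra|]. apply Rmult_le_pos; lra.
    apply Rmult_le_compat_l; [lra|]. 
    replace ((Lam + 1) * (L * (L + m0)) ) with ((L + 1) * (Lam * (Lam + m0)) + (L - Lam) * (L * Lam + L + Lam + m0)) by ring. lra. }
  nra.
Qed.

Lemma ratio_low a l L m0 M : 0 <= a -> a <= l -> 1 <= L -> 1 <= m0 -> L + m0 <= M ->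
  a / M <= l * (L + 1) / (L * (L + m0)).
Proof.
  intros. apply Rle_trans with (l / (L + m0)).
  - apply (Rmult_le_reg_r (M * (L + m0))). nra. field_simplify; nra.
  - apply (Rmult_le_reg_r (L * (L + m0))). nra. field_simplify; try nra.
Qed.

Lemma rs_Sl f n : rs f (S n) = f 0%nat + rs (fun x => f (S x)) n.
Proof. unfold rs. simpl. rewrite <- seq_shift. rewrite map_map. unfold Rsum; simpl. reflexivity. Qed.

Lemma rs_ext f g n : (forall k, (k < n)%nat -> f k = g k) -> rs f n = rs g n.
Proof. intro H. unfold rs. apply Rsum_ext. intros x Hx. apply in_seq in Hx. apply H. lia. Qed.

Lemma rs_rev f m : rs (fun x => f (m - 1 - x)%nat) m = rs f m.
Proof.
  induction m.
  - reflexivity.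
  - rewrite rs_Sl, rs_S. rewrite (rs_ext _ (fun x => f (m - 1 - x)%nat)).
    + rewrite IHm. replace (S m - 1 - 0)%nat with m by lia. lra.
    + intros. f_equal. lia.
Qed.

Lemma rs_pow x m : x <> 1 -> rs (pow x) m = (1 - x ^ m) / (1 - x).
Proof.
  intro H. induction m.
  - unfold rs, Rsum; simpl. field. lra.
  - rewrite rs_S, IHm. simpl. field. lra.
Qed.

Lemma rs_pow_le x m : 0 <= x < 1 -> rs (pow x) m <= 1 / (1 - x).
Proof.
  intro H. rewrite rs_pow by lra. apply Rmult_le_compat_r.
  left; apply Rinv_0_lt_compat; lra. pose proof (pow_le x m). lra.
Qed.

Lemma rs_nonneg f m : (forall k, 0 <= f k) -> 0 <= rs f m.
Proof. intro H. induction m; [unfold rs, Rsum; simpl; lra|]. rewrite rs_S. pose proof (H m); lra. Qed.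

Lemma rs_ind D b m : (1 <= b <= m)%nat ->
  rs (fun x => if (m - b <=? x)%nat then D ^ (m - 1 - x) else 0) m = rs (pow D) b.
Proof.
  intro H.
  rewrite (rs_ext _ (fun x => (fun k => if (k <? b)%nat then D ^ k else 0) (m - 1 - x)%nat)).
  2:{ intros k Hk. simpl. destruct (Nat.leb_spec (m - b) k); destruct (Nat.ltb_spec (m - 1 - k) b); auto; lia. }
  rewrite (rs_rev (fun k => if (k <? b)%nat then D ^ k else 0) m). unfold rs. replace m with (b + (m - b))%nat at 1 by lia.
  rewrite seq_app, map_app, Rsum_app. simpl.
  rewrite (Rsum_ext _ (fun _ => 0) (seq b (m - b))).
  2:{ intros x Hx. apply in_seq in Hx. destruct (Nat.ltb_spec x b); [lia|auto]. }
  rewrite (Rsum_ext _ (pow D) (seq 0 b)).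
  2:{ intros x Hx. apply in_seq in Hx. destruct (Nat.ltb_spec x b); [auto|lia]. }
  assert (Rsum (map (fun _ : nat => 0) (seq b (m - b))) = 0).
  { induction (seq b (m - b)); unfold Rsum in *; simpl; lra. }
  lra.
Qed.

Lemma Rprod_nonneg {A} (f : A -> R) l : (forall a, In a l -> 0 <= f a) -> 0 <= Rprod (map f l).
Proof.
  induction l; intro H; unfold Rprod in *; simpl; [lra|].
  apply Rmult_le_pos; auto with datatypes.
Qed.

Lemma Rprod_le {A} (f g : A -> R) l : (forall a, In a l -> 0 <= f a <= g a) ->
  Rprod (map f l) <= Rprod (map g l).
Proof.
  induction l; intro H; unfold Rprod in *; simpl; [lra|].
  apply Rmult_le_compat; auto with datatypes.
  apply H; auto with datatypes. apply Rprod_nonneg. intros; apply H; auto with datatypes.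
  apply H; auto with datatypes.
Qed.

Lemma inbox_dec lo l ms : inbox lo l ms \/ ~ inbox lo l ms.
Proof.
  revert ms; induction l; destruct ms; simpl; auto.
  destruct (IHl ms); destruct (le_lt_dec (lo n) a); destruct (lt_dec a n); try tauto; right; lia.
Qed.

Lemma pg_mono g g' l ms : (forall x m, 0 <= g x m <= g' x m) -> pg g l ms <= pg g' l ms.
Proof.
  intro H; revert ms; induction l; destruct ms; simpl; try lra.
  apply Rmult_le_compat; try apply H; auto. apply pg_nonneg; intros; apply H.
Qed.

Lemma pow_le_one x k : 0 <= x <= 1 -> x ^ k <= 1.
Proof. intro H. rewrite <- (pow1 k). apply pow_incr. lra. Qed.

Lemma pow_anti x a b : 0 <= x <= 1 -> (b <= a)%nat -> x ^ a <= x ^ b.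
Proof.
  intros H Hab. replace a with (b + (a - b))%nat by lia. rewrite pow_add.
  pose proof (pow_le_one x (a - b) H). pose proof (pow_le x b (proj1 H)).
  pose proof (pow_le x (a - b) (proj1 H)). nra.
Qed.

Lemma pg_split th v b l ms : 0 <= th <= 1 -> 0 <= v ->
  inbox (fun _ => 0%nat) l ms -> ~ inbox (fun m => m - b)%nat l ms ->
  pg (fun x m => (th * v) ^ (m - 1 - x)) l ms <= th ^ b * pg (fun x m => v ^ (m - 1 - x)) l ms.
Proof.
  intros Ht Hv. revert ms; induction l; destruct ms; simpl; try tauto.
  intros [H1 H2] H3.
  assert (Hm : forall k, 0 <= (th * v) ^ k <= v ^ k).
  { intro k. rewrite Rpow_mult_distr. 
    pose proof (pow_le v k Hv). pose proof (pow_le th k (proj1 Ht)). split. nra.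
    assert (th ^ k <= 1) by (apply pow_le_one; lra). nra. }
  destruct (le_lt_dec (n - b) a).
  - assert (~ inbox (fun m => m - b)%nat l ms) by tauto.
    specialize (IHl ms H2 H). pose proof (Hm (n - 1 - a)%nat).
    assert (0 <= pg (fun x m => (th * v) ^ (m - 1 - x)) l ms) by (apply pg_nonneg; intros; apply pow_le; nra).
    pose proof (pow_le th b (proj1 Ht)). 
    apply Rle_trans with (v ^ (n - 1 - a) * (th ^ b * pg (fun x m => v ^ (m - 1 - x)) l ms)).
    apply Rmult_le_compat; lra. lra.
  - assert (pg (fun x m => (th * v) ^ (m - 1 - x)) l ms <= pg (fun x m => v ^ (m - 1 - x)) l ms)
      by (apply pg_mono; intros; apply Hm).
    assert (0 <= pg (fun x m => (th * v) ^ (m - 1 - x)) l ms) by (apply pg_nonneg; intros; apply pow_le; nra).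
    rewrite Rpow_mult_distr.
    assert (th ^ (n - 1 - a) <= th ^ b).
    { apply pow_anti; [lra|lia]. }
    pose proof (pow_le th (n - 1 - a) (proj1 Ht)). pose proof (pow_le v (n - 1 - a) Hv).
    apply Rle_trans with ((th ^ b * v ^ (n - 1 - a)) * pg (fun x m => v ^ (m - 1 - x)) l ms).
    apply Rmult_le_compat; try nra. right; ring.
Qed.

Lemma Phi_ratio m0 K c : (1 <= m0)%nat ->
  Phi m0 K * c = Phi m0 (S K) * (c * (INR K + 1 + 1) / ((INR K + 1) * (INR K + 1 + INR m0))).
Proof.
  intro H. pose proof (Phi_step m0 K H). pose proof (pos_INR K). pose proof (pos_INR m0).
  apply (Rmult_eq_reg_r ((INR K + 1) * (INR K + 1 + INR m0))).
  2:{ apply Rgt_not_eq. apply Rmult_lt_0_compat; lra. }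
  replace (Phi m0 K * c * ((INR K + 1) * (INR K + 1 + INR m0))) with
     (Phi m0 K * ((INR K + 1) * (INR K + 1 + INR m0)) * c) by ring.
  rewrite H0. field. lra.
Qed.

Lemma psi_nonneg m0 E l : 0 <= psi (Phi m0) E l.
Proof. unfold psi. apply Rmult_le_pos. apply Phi_nonneg. left; apply Rinv_0_lt_compat, dfact_pos. Qed.

Lemma sumf_pred_le ms : (sumf pred ms <= list_sum ms)%nat.
Proof. induction ms; unfold sumf in *; simpl; lia. Qed.

Lemma Rprod_ext {A} (f g : A -> R) l : (forall x, In x l -> f x = g x) ->
  Rprod (map f l) = Rprod (map g l).
Proof. intro H. f_equal. apply map_ext_in. auto. Qed.

Section Bounds.
Variables (m0 b : nat) (ms : list nat).
Definition Llo := sumf (fun m => m - b)%nat ms.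
Definition xf (m : nat) : R := INR m * (INR Llo + 1) / (INR Llo * (INR Llo + INR m0)).
Definition Mt := (m0 + list_sum ms)%nat.
Definition Dm (m : nat) : R := INR (m - b) / INR Mt.
Definition ph := psi (Phi m0) 0 (map pred ms).

Theorem upper_bound (th v : R) : (1 <= m0)%nat -> (1 <= Llo)%nat ->
  (forall m, In m ms -> xf m < 1) ->
  (forall m, In m ms -> INR m / (INR m + INR m0 - 1) <= th * v) ->
  0 <= th <= 1 -> 0 <= v < 1 ->
  B (m0 :: ms) <= ph * (Rprod (map (fun m => 1 / (1 - xf m)) ms) + th ^ b * Rprod (map (fun _ => 1 / (1 - v)) ms)).
Proof.
  intros Hm0 HL Hx Hg Ht Hv.
  assert (Hxf : forall m, 0 <= xf m).
  { intro m. unfold xf. pose proof (pos_INR m). pose proof (pos_INR m0).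
    assert (1 <= INR Llo) by (apply (le_INR 1); lia).
    apply Rmult_le_pos. nra. left; apply Rinv_0_lt_compat; nra. }
  rewrite B_hs by lia.
  apply Rle_trans with (Rsum (map (fun l => ph * (pg (fun x m => xf m ^ (m - 1 - x)) l ms
                     + th ^ b * pg (fun x m => v ^ (m - 1 - x)) l ms)) (tuples ms))).
  - apply Rsum_le. intros l Hl. apply tuples_inbox in Hl.
    assert (Hph : 0 <= ph) by apply psi_nonneg.
    assert (0 <= pg (fun x m => xf m ^ (m - 1 - x)) l ms) by (apply pg_nonneg; intros; apply pow_le; auto).
    assert (0 <= pg (fun x m => v ^ (m - 1 - x)) l ms) by (apply pg_nonneg; intros; apply pow_le; lra).
    pose proof (pow_le th b (proj1 Ht)).
    destruct (inbox_dec (fun m => m - b)%nat l ms) as [Hin|Hout].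
    + eapply Rle_trans.
      * apply (path_up (Phi m0) (fun m => m - b)%nat xf Llo (sumf pred ms) ltac:(apply Phi_nonneg) Hxf ms); auto.
        -- intros K t m Hm Ht1 Ht2 Ht3 HK1 HK2. rewrite Phi_ratio by auto.
           rewrite (Rmult_comm _ (Phi m0 (S K))).
           apply Rmult_le_compat_l; [apply Phi_nonneg|]. unfold xf.
           apply ratio_corner.
           ++ apply pos_INR.
           ++ apply le_INR; lia.
           ++ apply (le_INR 1); lia.
           ++ replace (INR K + 1) with (INR (S K)) by (rewrite S_INR; ring). apply le_INR; lia.
           ++ apply (le_INR 1); lia.
        -- unfold Llo; lia.
      * fold ph. set (pv := pg (fun x m : nat => v ^ (m - 1 - x)) l ms) in *.
        assert (0 <= ph * (th ^ b * pv)) by (apply Rmult_le_pos; [auto|apply Rmult_le_pos; auto]). lra.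
    + eapply Rle_trans.
      * apply (path_up (Phi m0) (fun _ => 0%nat) (fun _ => th * v) 0 (sumf pred ms) ltac:(apply Phi_nonneg) ltac:(intros; nra) ms); auto.
        -- intros K t m Hm Ht1 Ht2 Ht3 HK1 HK2. rewrite Phi_ratio by auto.
           rewrite (Rmult_comm _ (Phi m0 (S K))).
           apply Rmult_le_compat_l; [apply Phi_nonneg|].
           eapply Rle_trans; [|apply (Hg m Hm)].
           apply ratio_glob.
           ++ apply (le_INR 1); lia.
           ++ replace (INR K + 1) with (INR (S K)) by (rewrite S_INR; ring). apply le_INR; lia.
           ++ replace (INR (S t) + 1) with (INR (S (S t))) by (rewrite (S_INR (S t)); ring). apply le_INR; lia.
           ++ apply (le_INR 1); lia.
        -- lia.
      * fold ph. pose proof (pg_split th v b l ms Ht (proj1 Hv) Hl Hout).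
        set (pv := pg (fun x m : nat => v ^ (m - 1 - x)) l ms) in *.
        set (px := pg (fun x m : nat => xf m ^ (m - 1 - x)) l ms) in *.
        set (pt := pg (fun x m : nat => (th * v) ^ (m - 1 - x)) l ms) in *.
        assert (pt * ph <= th ^ b * pv * ph) by (apply Rmult_le_compat_r; auto).
        assert (0 <= ph * px) by (apply Rmult_le_pos; auto). lra.
  - rewrite Rsum_scal, Rsum_plus, Rsum_scal, !tuples_pg.
    apply Rmult_le_compat_l; [apply psi_nonneg|]. apply Rplus_le_compat.
    + apply Rprod_le. intros m Hm.
      rewrite (rs_rev (fun k => xf m ^ k) m). split. apply rs_nonneg; intros; apply pow_le; auto.
      apply rs_pow_le. split; auto.
    + apply Rmult_le_compat_l. apply pow_le; lra. apply Rprod_le. intros m Hm.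
      rewrite (rs_rev (fun k => v ^ k) m). split. apply rs_nonneg; intros; apply pow_le; lra.
      apply rs_pow_le. lra.
Qed.

Lemma pg_ind_zero D l ms' : inbox (fun _ => 0%nat) l ms' -> ~ inbox (fun m => m - b)%nat l ms' ->
  pg (fun x m => if (m - b <=? x)%nat then D m ^ (m - 1 - x) else 0) l ms' = 0.
Proof.
  revert ms'; induction l; destruct ms'; simpl; try tauto.
  intros [H1 H2] H3. destruct (Nat.leb_spec (n - b) a).
  - rewrite IHl; auto. ring. intro; apply H3; split; auto; lia.
  - ring.
Qed.

Lemma pg_ind_in D l ms' : inbox (fun m => m - b)%nat l ms' ->
  pg (fun x m => if (m - b <=? x)%nat then D m ^ (m - 1 - x) else 0) l ms' =
  pg (fun x m => D m ^ (m - 1 - x)) l ms'.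
Proof.
  revert ms'; induction l; destruct ms'; simpl; try tauto.
  intros [H1 H2]. rewrite IHl by auto. destruct (Nat.leb_spec (n - b) a); [reflexivity|lia].
Qed.

Theorem lower_bound : (1 <= m0)%nat -> (1 <= b)%nat -> (forall m, In m ms -> (b <= m)%nat) ->
  ph * Rprod (map (fun m => rs (pow (Dm m)) b) ms) <= B (m0 :: ms).
Proof.
  intros Hm0 Hb Hms.
  assert (HMt : 0 < INR Mt) by (apply lt_0_INR; unfold Mt; lia).
  assert (HD : forall m, 0 <= Dm m).
  { intro m. unfold Dm. apply Rmult_le_pos. apply pos_INR. left; apply Rinv_0_lt_compat; lra. }
  rewrite B_hs by lia.
  set (gi := fun x m => if (m - b <=? x)%nat then Dm m ^ (m - 1 - x) else 0).
  apply Rle_trans with (Rsum (map (fun l => ph * pg gi l ms) (tuples ms))).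
  - rewrite Rsum_scal, tuples_pg. right. f_equal. apply Rprod_ext. intros m Hm.
    unfold gi. rewrite rs_ind; auto.
  - apply Rsum_le. intros l Hl. apply tuples_inbox in Hl.
    destruct (inbox_dec (fun m => m - b)%nat l ms) as [Hin|Hout].
    + unfold gi. rewrite pg_ind_in by auto. rewrite Rmult_comm.
      apply (path_lo (Phi m0) (fun m => m - b)%nat Dm 0 (sumf pred ms) ltac:(apply Phi_nonneg) HD ms); auto.
      * intros K t m Hm Ht1 Ht2 Ht3 HK1 HK2. rewrite Phi_ratio by auto.
        rewrite (Rmult_comm (Dm m)). apply Rmult_le_compat_l; [apply Phi_nonneg|]. unfold Dm.
        apply ratio_low.
        -- apply pos_INR.
        -- apply le_INR; lia.
        -- replace (INR K + 1) with (INR (S K)) by (rewrite S_INR; ring). apply (le_INR 1); lia.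
        -- apply (le_INR 1); lia.
        -- replace (INR K + 1 + INR m0) with (INR (S K + m0)) by (rewrite plus_INR, S_INR; ring).
           apply le_INR. unfold Mt. pose proof (sumf_pred_le ms). lia.
      * lia.
    + unfold gi. rewrite pg_ind_zero by auto. rewrite Rmult_0_r. apply psi_nonneg.
Qed.
End Bounds.

Lemma Rprod_app a b : Rprod (a ++ b) = Rprod a * Rprod b.
Proof. induction a; unfold Rprod in *; simpl; [ring|]. rewrite IHa. ring. Qed.

Lemma Rprod_mult {A} (f g : A -> R) l :
  Rprod (map (fun x => f x * g x) l) = Rprod (map f l) * Rprod (map g l).
Proof. induction l; unfold Rprod in *; simpl; [ring|]. rewrite IHl. ring. Qed.

Lemma fact_prod a d : INR (fact (a + d)) = INR (fact a) * Rprod (map (fun i => INR (a + 1 + i)) (seq 0 d)).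
Proof.
  induction d.
  - rewrite Nat.add_0_r. unfold Rprod; simpl. ring.
  - rewrite seq_S, map_app, Rprod_app, <- Rmult_assoc, <- IHd.
    replace (a + S d)%nat with (S (a + d)) by lia. rewrite fact_S_INR.
    unfold Rprod; cbn [map fold_right]. replace (a + 1 + (0 + d))%nat with (S (a + d)) by lia. ring.
Qed.

Lemma Rprod_pos {A} (f : A -> R) l : (forall a, In a l -> 0 < f a) -> 0 < Rprod (map f l).
Proof.
  induction l; intro H; unfold Rprod in *; simpl; [lra|].
  apply Rmult_lt_0_compat; auto with datatypes.
Qed.

Lemma dfact_split ms : (forall m, In m ms -> (1 <= m)%nat) ->
  Rprod (map (fun x => INR (fact x)) ms) = Rprod (map INR ms) * dfact (map pred ms).
Proof.
  unfold dfact. rewrite map_map. rewrite <- Rprod_mult. intro H. apply Rprod_ext.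
  intros m Hm. specialize (H m Hm). destruct m; [lia|]. simpl pred. rewrite fact_S_INR. reflexivity.
Qed.

Lemma list_sum_pred ms : (forall m, In m ms -> (1 <= m)%nat) ->
  list_sum ms = (sumf pred ms + length ms)%nat.
Proof.
  induction ms; intro H; unfold sumf in *; simpl; auto.
  rewrite IHms by auto with datatypes. specialize (H a (or_introl eq_refl)). lia.
Qed.

Definition Qf (m0 : nat) (ms : list nat) : R :=
  INR (sumf pred ms + 1) * Rprod (map (fun i => INR (sumf pred ms + m0 + 1 + i)) (seq 0 (length ms)))
  / Rprod (map (fun m => INR (m0 + list_sum ms) - INR m) (m0 :: ms)).

Lemma Bapprox_eq m0 ms : (1 <= m0)%nat -> (forall m, In m ms -> (1 <= m)%nat) ->
  Bapprox (m0 :: ms) = ph m0 ms * Qf m0 ms.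
Proof.
  intros H0 H. unfold Bapprox, ph, Qf, psi, Phi.
  simpl list_sum. simpl map.
  set (Dd := Rprod (map (fun m => INR (m0 + list_sum ms) - INR m) (m0 :: ms))).
  replace (Rprod (INR (fact m0) :: map (fun x => INR (fact x)) ms)) with
     (INR (fact m0) * Rprod (map (fun x => INR (fact x)) ms)) by reflexivity.
  replace (Rprod (INR m0 :: map INR ms)) with (INR m0 * Rprod (map INR ms)) by reflexivity.
  rewrite dfact_split by auto.
  rewrite (list_sum_pred ms H) at 2. 
  replace (m0 + (sumf pred ms + length ms))%nat with ((sumf pred ms + m0) + length ms)%nat by lia.
  rewrite fact_prod. simpl (0 + _)%nat.
  fold (sumf pred ms).
  destruct m0 as [|k]; [lia|]. rewrite fact_S_INR. replace (S k - 1)%nat with k by lia.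
  assert (0 < Rprod (map INR ms)) by (apply Rprod_pos; intros x Hx; apply lt_0_INR; specialize (H x Hx); lia).
  pose proof (dfact_pos (map pred ms)). pose proof (INR_fact_lt_0 k).
  pose proof (INR_fact_lt_0 (sumf pred ms + S k)).
  assert (0 < INR (S k)) by (apply lt_0_INR; lia).
  assert (0 < INR (sumf pred ms + 1)) by (apply lt_0_INR; lia).
  unfold Rdiv. set (iD := / Rprod (_ :: map (fun m : nat => INR (S k + list_sum ms) - INR m) ms)). field. repeat split; lra.
Qed.

Lemma ph_pos m0 ms : 0 < ph m0 ms.
Proof.
  unfold ph, psi, Phi. apply Rmult_lt_0_compat; [|apply Rinv_0_lt_compat, dfact_pos].
  apply Rdiv_lt_0_compat. apply INR_fact_lt_0. apply Rmult_lt_0_compat. apply INR_fact_lt_0.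
  apply lt_0_INR; lia.
Qed.

From Coquelicot Require Import Coquelicot.

Definition ev (P : R -> Prop) := exists N, forall n, N <= n -> P n.
Definition lim (f : R -> R) (c : R) := is_lim f p_infty c.

Lemma ev_and P Q : ev P -> ev Q -> ev (fun n => P n /\ Q n).
Proof.
  intros [N1 H1] [N2 H2]. exists (Rmax N1 N2). intros n Hn.
  split; [apply H1|apply H2]; eapply Rle_trans; eauto; [apply Rmax_l|apply Rmax_r].
Qed.

Lemma ev_mono (P Q : R -> Prop) : (forall n, P n -> Q n) -> ev P -> ev Q.
Proof. intros H [N HN]. exists N. auto. Qed.

Lemma ev_forall_list {A} (l : list A) (P : A -> R -> Prop) :
  (forall a, In a l -> ev (P a)) -> ev (fun n => forall a, In a l -> P a n).
Proof.
  induction l; intro H.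
  - exists 0. intros n _ a [].
  - destruct (ev_and _ _ (H a (or_introl eq_refl)) (IHl (fun b Hb => H b (or_intror Hb)))) as [N HN].
    exists N. intros n Hn b Hb0. destruct Hb0 as [E|Hb]; [subst; apply (proj1 (HN n Hn)) | apply (proj2 (HN n Hn) b Hb)].
Qed.

Lemma lim_ev (f : R -> R) c eps : lim f c -> 0 < eps -> ev (fun n => Rabs (f n - c) < eps).
Proof.
  intros H He. apply is_lim_spec in H. specialize (H (mkposreal eps He)).
  simpl in H. destruct H as [M HM]. exists (M + 1). intros n Hn. apply HM. lra.
Qed.

Lemma lim_ev_lt f c d : lim f c -> c < d -> ev (fun n => f n < d).
Proof.
  intros H Hd. apply (ev_mono (fun n => Rabs (f n - c) < d - c)).
  intros n Hn. apply Rabs_def2 in Hn. lra. apply lim_ev; auto; lra.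
Qed.

Lemma lim_ev_gt f c d : lim f c -> d < c -> ev (fun n => d < f n).
Proof.
  intros H Hd. apply (ev_mono (fun n => Rabs (f n - c) < c - d)).
  intros n Hn. apply Rabs_def2 in Hn. lra. apply lim_ev; auto; lra.
Qed.

Lemma lim_const c : lim (fun _ => c) c.
Proof. apply is_lim_const. Qed.

Lemma lim_plus f g a b : lim f a -> lim g b -> lim (fun n => f n + g n) (a + b).
Proof. intros. eapply is_lim_plus; eauto. reflexivity. Qed.

Lemma lim_mult f g a b : lim f a -> lim g b -> lim (fun n => f n * g n) (a * b).
Proof. intros. apply (is_lim_mult f g p_infty a b); auto. simpl; auto. Qed.

Lemma lim_inv f a : lim f a -> a <> 0 -> lim (fun n => / f n) (/ a).
Proof.
  intros H Ha. apply (is_lim_inv f p_infty a) in H. exact H. intro E. injection E. auto.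
Qed.

Lemma lim_invn : lim (fun n => / n) 0.
Proof.
  unfold lim. replace (Finite 0) with (Rbar_inv p_infty) by reflexivity.
  apply is_lim_inv. apply is_lim_id. discriminate.
Qed.

Lemma lim_ext f g c : ev (fun n => f n = g n) -> lim f c -> lim g c.
Proof.
  intros [N HN] H. unfold lim. apply (is_lim_ext_loc f g). exists N. intros. apply HN; lra. auto.
Qed.

Lemma lim_unique_eq f c d : lim f c -> c = d -> lim f d.
Proof. intros; subst; auto. Qed.


Lemma lim_prod {A} (l : list A) (f : A -> R -> R) (c : A -> R) :
  (forall a, In a l -> lim (f a) (c a)) ->
  lim (fun n => Rprod (map (fun a => f a n) l)) (Rprod (map c l)).
Proof.
  induction l; intro H; unfold Rprod; simpl.
  - apply lim_const.
  - apply lim_mult; [auto with datatypes| apply IHl; auto with datatypes].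
Qed.

Lemma lim_pow f c k : lim f c -> lim (fun n => f n ^ k) (c ^ k).
Proof.
  intro H. induction k; simpl. apply lim_const. apply lim_mult; auto.
Qed.

Lemma lim_rs_pow f c b : lim f c -> lim (fun n => rs (pow (f n)) b) (rs (pow c) b).
Proof.
  intro H. induction b.
  - unfold rs, Rsum; simpl. apply lim_const.
  - apply (lim_ext (fun n => rs (pow (f n)) b + f n ^ b)).
    + exists 0. intros. rewrite rs_S. reflexivity.
    + rewrite rs_S. apply lim_plus; auto. apply lim_pow; auto.
Qed.

Lemma lim_lin a c : lim (fun n => a - c * / n) a.
Proof.
  assert (H : lim (fun n => a + (-c) * / n) (a + (-c) * 0)).
  { apply lim_plus. apply lim_const. apply lim_mult. apply lim_const. apply lim_invn. }
  apply (lim_unique_eq _ (a + -c * 0)); [|ring].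
  apply (lim_ext (fun n => a + (-c) * / n)); auto. exists 0; intros; ring.
Qed.

Lemma lim_div f g a b : lim f a -> lim g b -> b <> 0 -> lim (fun n => f n / g n) (a / b).
Proof. intros. unfold Rdiv. apply lim_mult; auto. apply lim_inv; auto. Qed.

Lemma Rprod_scal {A} (c : R) (f : A -> R) l :
  Rprod (map (fun x => c * f x) l) = c ^ length l * Rprod (map f l).
Proof. induction l; unfold Rprod in *; simpl; [ring|]. rewrite IHl. ring. Qed.

Lemma Rprod_const {A} (c : R) (l : list A) : Rprod (map (fun _ => c) l) = c ^ length l.
Proof. induction l; unfold Rprod in *; simpl; [ring|]. rewrite IHl. ring. Qed.

Lemma Rsum_const {A} (c : R) (l : list A) : Rsum (map (fun _ => c) l) = INR (length l) * c.
Proof. induction l; unfold Rsum in *; cbn [map fold_right length]; [simpl; ring|]. rewrite IHl, S_INR. ring. Qed.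

Lemma Rprod_inv {A} (f : A -> R) l : Rprod (map (fun x => / f x) l) = / Rprod (map f l).
Proof.
  induction l; unfold Rprod in *; simpl. rewrite Rinv_1; auto. rewrite IHl, Rinv_mult. auto.
Qed.

Lemma INR_list_sum l : INR (list_sum l) = Rsum (map INR l).
Proof. induction l; unfold Rsum in *; simpl; auto. rewrite plus_INR, IHl. auto. Qed.

Lemma Rsum_minus {A} (f g : A -> R) l :
  Rsum (map (fun x => f x - g x) l) = Rsum (map f l) - Rsum (map g l).
Proof. induction l; unfold Rsum in *; simpl; [ring|]. rewrite IHl. ring. Qed.

Lemma prod_lower {A} (l : list A) (a c : A -> R) (ab : R) :
  (forall x, In x l -> 0 <= a x <= ab /\ 0 <= c x) -> 0 <= ab <= 1 ->
  (1 - INR (length l) * ab) * Rprod (map c l) <= Rprod (map (fun x => (1 - a x) * c x) l).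
Proof.
  intros H Hab. induction l as [|y l IHl]; unfold Rprod in *; cbn [map fold_right length].
  - simpl; lra.
  - fold (Rprod (map c l)) in *. fold (Rprod (map (fun x => (1 - a x) * c x) l)) in *.
    specialize (IHl (fun x Hx => H x (or_intror Hx))).
    destruct (H y (or_introl eq_refl)) as [[Ha1 Ha2] Hc].
    assert (0 <= Rprod (map c l)) by (apply Rprod_nonneg; intros; apply H; auto with datatypes).
    rewrite S_INR.
    set (X := Rprod (map (fun x => (1 - a x) * c x) l)) in *.
    set (Y := Rprod (map c l)) in *.
    set (k := INR (length l)) in *.
    assert (0 <= k) by apply pos_INR.
    destruct (Rle_dec 0 (1 - k * ab)).
    + assert (X' : (1 - a y) * c y * ((1 - k * ab) * Y) <= (1 - a y) * c y * X).
      { apply Rmult_le_compat_l; auto. apply Rmult_le_pos; lra. }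
      assert ((1 - (k + 1) * ab) * (c y * Y) <= (1 - a y) * c y * ((1 - k * ab) * Y)).
      { assert (0 <= c y * Y) by (apply Rmult_le_pos; auto).
        assert (0 <= (ab - a y) * (1 - k * ab) * (c y * Y)) by (apply Rmult_le_pos; [apply Rmult_le_pos|]; lra).
        assert (0 <= k * ab * a y * (c y * Y)) by (repeat apply Rmult_le_pos; lra).
        nra. }
      lra.
    + assert (0 <= X).
      { unfold X. apply Rprod_nonneg. intros x Hx. destruct (H x (or_intror Hx)) as [[? ?] ?].
        apply Rmult_le_pos; lra. }
      assert (0 <= c y * Y) by (apply Rmult_le_pos; auto).
      assert (0 <= (1 - a y) * c y * X) by (apply Rmult_le_pos; [apply Rmult_le_pos|]; lra).
      assert ((1 - (k + 1) * ab) * (c y * Y) <= 0).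
      { apply Rmult_le_0_r; [nra|auto]. }
      lra.
Qed.

Section Conv.
Variables (K : nat) (alpha : nat -> R) (b : nat) (th v : R).
Definition Jl := seq 1 (K - 1).
Definition As := Rsum (map alpha (seq 0 K)).
Definition A1s := Rsum (map alpha Jl).
Definition c2 := INR (K - 1) * INR b.
Definition xn j n := alpha j * n * (A1s * n - c2 + 1) / ((A1s * n - c2) * (A1s * n - c2 + alpha 0%nat * n)).
Definition gn j n := alpha j * n / (alpha j * n + alpha 0%nat * n - 1).
Definition LoBn n := Rprod (map (fun j => rs (pow ((alpha j * n - INR b) / (As * n))) b) Jl).
Definition UpBn n := Rprod (map (fun j => 1 / (1 - xn j n)) Jl) + th ^ b * Rprod (map (fun _ => 1 / (1 - v)) Jl).
Definition Qn n := (A1s * n - INR (K - 1) + 1) *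
   Rprod (map (fun i => A1s * n - INR (K - 1) + alpha 0%nat * n + 1 + INR i) (seq 0 (K - 1)))
   / Rprod (map (fun j => As * n - alpha j * n) (seq 0 K)).

Lemma seq0K : (1 <= K)%nat -> seq 0 K = 0%nat :: Jl.
Proof. intro H. unfold Jl. destruct K; [lia|]. simpl. rewrite Nat.sub_0_r. reflexivity. Qed.

Lemma As_split : (1 <= K)%nat -> As = alpha 0%nat + A1s.
Proof. intro H. unfold As, A1s. rewrite seq0K by auto. reflexivity. Qed.

Lemma conv (n : R) (m : nat -> nat) : (2 <= K)%nat -> (1 <= b)%nat -> 0 < n ->
  (forall j, (j < K)%nat -> (0 < m j)%nat /\ INR (m j) = alpha j * n) ->
  (forall j, In j Jl -> INR b <= alpha j * n) ->
  1 <= A1s * n - c2 ->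
  (forall j, In j Jl -> xn j n < 1) ->
  (forall j, In j Jl -> gn j n <= th * v) ->
  0 <= th <= 1 -> 0 <= v < 1 -> 0 < Qn n ->
  LoBn n / Qn n <= B (map m (seq 0 K)) / Bapprox (map m (seq 0 K)) <= UpBn n / Qn n.
Proof.
  intros HK Hb Hn Hm HE1 HE2 HE3 HE4 Hth Hv HQ.
  assert (HJ : forall j, In j Jl -> (1 <= j < K)%nat).
  { intros j Hj. unfold Jl in Hj. apply in_seq in Hj. lia. }
  set (ms := map m Jl). set (m0 := m 0%nat).
  assert (Hseq : map m (seq 0 K) = m0 :: ms) by (rewrite seq0K by lia; reflexivity).
  rewrite Hseq.
  assert (Hin : forall x, In x ms -> exists j, x = m j /\ In j Jl).
  { intros x Hx. unfold ms in Hx. apply in_map_iff in Hx. destruct Hx as [j [<- Hj]]. eauto. }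
  assert (Hm0 : (1 <= m0)%nat) by (apply (Hm 0%nat); lia).
  assert (Hm0' : INR m0 = alpha 0%nat * n) by (apply (Hm 0%nat); lia).
  assert (Hbms : forall x, In x ms -> (b <= x)%nat).
  { intros x Hx. destruct (Hin x Hx) as [j [-> Hj]]. apply INR_le.
    rewrite (proj2 (Hm j ltac:(specialize (HJ j Hj); lia))). auto. }
  assert (H1ms : forall x, In x ms -> (1 <= x)%nat).
  { intros x Hx. specialize (Hbms x Hx). lia. }
  assert (HA : As = alpha 0%nat + A1s) by (apply As_split; lia).
  assert (HlenJ : length Jl = (K - 1)%nat) by (unfold Jl; apply length_seq).
  assert (HLlo : INR (Llo b ms) = A1s * n - c2).
  { unfold Llo, sumf. rewrite INR_list_sum, !map_map. unfold ms. rewrite map_map.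
    rewrite (Rsum_ext _ (fun j => alpha j * n - INR b)).
    - rewrite Rsum_minus, Rsum_scal_r, Rsum_const, HlenJ. unfold A1s, c2. ring.
    - intros j Hj. rewrite minus_INR. rewrite (proj2 (Hm j ltac:(specialize (HJ j Hj); lia))). auto.
      apply Hbms. unfold ms. apply in_map. auto. }
  assert (Hsp : INR (sumf pred ms) = A1s * n - INR (K - 1)).
  { unfold sumf. rewrite INR_list_sum, !map_map. unfold ms. rewrite map_map.
    rewrite (Rsum_ext _ (fun j => alpha j * n - 1)).
    - rewrite Rsum_minus, Rsum_scal_r, Rsum_const, HlenJ. unfold A1s. ring.
    - intros j Hj. replace (pred (m j)) with (m j - 1)%nat by lia. rewrite minus_INR.
      rewrite (proj2 (Hm j ltac:(specialize (HJ j Hj); lia))). auto.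
      apply H1ms. unfold ms. apply in_map. auto. }
  assert (HM : INR (m0 + list_sum ms) = As * n).
  { rewrite plus_INR, INR_list_sum, Hm0'. unfold ms. rewrite map_map.
    rewrite (Rsum_ext _ (fun j => alpha j * n)).
    - rewrite Rsum_scal_r, HA. fold A1s. ring.
    - intros j Hj. apply (Hm j). specialize (HJ j Hj); lia. }
  assert (HLlo1 : (1 <= Llo b ms)%nat) by (apply INR_le; rewrite HLlo; simpl; lra).
  assert (HU := upper_bound m0 b ms th v Hm0 HLlo1).
  assert (Hxf : forall j, In j Jl -> xf m0 b ms (m j) = xn j n).
  { intros j Hj. unfold xf, xn. rewrite HLlo, Hm0', (proj2 (Hm j ltac:(specialize (HJ j Hj); lia))). reflexivity. }
  specialize (HU ltac:(intros x Hx; destruct (Hin x Hx) as [j [-> Hj]]; rewrite Hxf; auto)).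
  specialize (HU ltac:(intros x Hx; destruct (Hin x Hx) as [j [-> Hj]];
     rewrite Hm0', (proj2 (Hm j ltac:(specialize (HJ j Hj); lia))); apply HE4; auto) Hth Hv).
  assert (HUe : Rprod (map (fun m1 => 1 / (1 - xf m0 b ms m1)) ms) + th ^ b * Rprod (map (fun _ => 1 / (1 - v)) ms) = UpBn n).
  { unfold UpBn, ms. rewrite !map_map. f_equal. apply Rprod_ext. intros j Hj. rewrite Hxf; auto. }
  rewrite HUe in HU.
  assert (HL := lower_bound m0 b ms Hm0 Hb Hbms).
  assert (HLe : Rprod (map (fun m1 => rs (pow (Dm m0 b ms m1)) b) ms) = LoBn n).
  { assert (HDm : forall j, In j Jl -> Dm m0 b ms (m j) = (alpha j * n - INR b) / (As * n)).
    { intros j Hj. unfold Dm, Mt. rewrite HM. rewrite minus_INR.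
      rewrite (proj2 (Hm j ltac:(specialize (HJ j Hj); lia))). auto.
      apply Hbms. unfold ms. apply in_map. auto. }
    transitivity (Rprod (map (fun j => rs (pow (Dm m0 b ms (m j))) b) Jl)).
    { unfold ms at 2. rewrite map_map. reflexivity. }
    unfold LoBn. apply Rprod_ext. intros j Hj. rewrite HDm; auto. }
  rewrite HLe in HL.
  rewrite Bapprox_eq by auto.
  assert (HQe : Qf m0 ms = Qn n).
  { unfold Qf, Qn. rewrite plus_INR, Hsp. unfold ms at 2. rewrite length_map, HlenJ.
    f_equal. f_equal. simpl (INR 1).
    - apply Rprod_ext. intros i _. rewrite !plus_INR, Hsp, Hm0'. simpl (INR 1). ring.
    - rewrite <- Hseq. rewrite map_map. apply Rprod_ext. intros j Hj. apply in_seq in Hj.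
      fold m0. fold ms. rewrite HM. rewrite (proj2 (Hm j ltac:(lia))). auto. }
  rewrite HQe.
  pose proof (ph_pos m0 ms).
  split.
  - apply (Rmult_le_reg_r (ph m0 ms * Qn n)). apply Rmult_lt_0_compat; auto.
    field_simplify; try lra. 
  - apply (Rmult_le_reg_r (ph m0 ms * Qn n)). apply Rmult_lt_0_compat; auto.
    field_simplify; try lra.
Qed.
End Conv.


Section Lims.
Variables (K : nat) (alpha : nat -> R).
Hypothesis hK : (2 <= K)%nat.
Hypothesis halpha : forall j, (j < K)%nat -> 0 < alpha j.

Lemma Rsum_nonneg (f : nat -> R) l : (forall y, In y l -> 0 <= f y) -> 0 <= Rsum (map f l).
Proof.
  induction l as [|a l IH]; intro H; unfold Rsum in *; simpl; [lra|].
  pose proof (H a (or_introl eq_refl)). assert (0 <= fold_right Rplus 0 (map f l)) by (apply IH; auto with datatypes). lra.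
Qed.

Lemma Rsum_ge_elt (f : nat -> R) l x : In x l -> (forall y, In y l -> 0 <= f y) -> f x <= Rsum (map f l).
Proof.
  induction l as [|a l IH]; simpl; [tauto|]. intros Hx H. unfold Rsum; simpl; fold (Rsum (map f l)).
  destruct Hx as [->|Hx].
  - pose proof (Rsum_nonneg f l (fun y Hy => H y (or_intror Hy))). lra.
  - pose proof (H a (or_introl eq_refl)). assert (f x <= Rsum (map f l)) by (apply IH; auto). lra.
Qed.

Lemma HJ j : In j (Jl K) -> (1 <= j < K)%nat.
Proof. intros Hj. unfold Jl in Hj. apply in_seq in Hj. lia. Qed.

Lemma a0_pos : 0 < alpha 0%nat.
Proof. apply halpha. lia. Qed.

Lemma alpha_le j : In j (Jl K) -> 0 < alpha j <= A1s K alpha.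
Proof.
  intro Hj. pose proof (HJ j Hj). split. apply halpha; lia.
  apply Rsum_ge_elt; auto. intros y Hy. pose proof (HJ y Hy). left; apply halpha; lia.
Qed.

Lemma A1_pos : 0 < A1s K alpha.
Proof.
  assert (In 1%nat (Jl K)) by (unfold Jl; apply in_seq; lia).
  pose proof (alpha_le 1 H). lra.
Qed.

Lemma HAs : As K alpha = alpha 0%nat + A1s K alpha.
Proof. apply As_split. lia. Qed.

Lemma As_pos : 0 < As K alpha.
Proof. rewrite HAs. pose proof a0_pos. pose proof A1_pos. lra. Qed.

Lemma As_minus_pos j : (j < K)%nat -> 0 < As K alpha - alpha j.
Proof.
  intro Hj. rewrite HAs. destruct j.
  - pose proof A1_pos. lra.
  - assert (In (S j) (Jl K)) by (unfold Jl; apply in_seq; lia).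
    pose proof (alpha_le _ H). pose proof a0_pos. lra.
Qed.

Lemma ev_ge1 : ev (fun n => 1 <= n).
Proof. exists 1. auto. Qed.

Lemma ev_lin_pos a c : 0 < a -> ev (fun n => 0 < a - c * / n).
Proof. intro Ha. apply (lim_ev_gt _ a). apply lim_lin. auto. Qed.

Lemma lim_xn b j : In j (Jl K) -> lim (xn K alpha b j) (alpha j / As K alpha).
Proof.
  intro Hj. pose proof A1_pos. pose proof As_pos. pose proof a0_pos. pose proof HAs.
  set (A1 := A1s K alpha) in *. set (A := As K alpha) in *. set (c := c2 K b).
  apply (lim_ext (fun n => alpha j * (A1 - (c - 1) * / n) / ((A1 - c * / n) * (A - c * / n)))).
  - destruct (ev_and _ _ ev_ge1 (ev_and _ _ (ev_lin_pos A1 c H) (ev_lin_pos A c H0))) as [N HN].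
    exists N. intros n Hn. destruct (HN n Hn) as [Hn1 [Hp1 Hp2]].
    unfold xn. fold A1. fold c.
    assert (0 < A1 * n - c) by (replace (A1 * n - c) with (n * (A1 - c * / n)) by (field; lra); nra).
    assert (0 < A * n - c) by (replace (A * n - c) with (n * (A - c * / n)) by (field; lra); nra).
    replace (A1 * n - c + 1) with (n * (A1 - (c - 1) * / n)) by (field; lra).
    replace (A1 * n - c) with (n * (A1 - c * / n)) by (field; lra).
    replace (n * (A1 - c * / n) + alpha 0%nat * n) with (n * (A - c * / n)) by (rewrite H2; field; lra).
    field. repeat split; try lra.
  - replace (alpha j / A) with (alpha j * (A1 - (c - 1) * 0) / ((A1 - c * 0) * (A - c * 0))) by (field; lra).
    apply lim_div. apply lim_mult. apply lim_const.
    apply (lim_unique_eq _ A1); [apply lim_lin|ring].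
    apply lim_mult; (eapply lim_unique_eq; [apply lim_lin|ring]).
    apply Rgt_not_eq. replace ((A1 - c * 0) * (A - c * 0)) with (A1 * A) by ring. nra.
Qed.

Lemma lim_gn j : In j (Jl K) -> lim (gn alpha j) (alpha j / (alpha j + alpha 0%nat)).
Proof.
  intro Hj. pose proof (alpha_le j Hj). pose proof a0_pos.
  apply (lim_ext (fun n => alpha j / (alpha j + alpha 0%nat - 1 * / n))).
  - destruct (ev_and _ _ ev_ge1 (ev_lin_pos (alpha j + alpha 0%nat) 1 ltac:(lra))) as [N HN].
    exists N. intros n Hn. destruct (HN n Hn) as [Hn1 Hp].
    unfold gn. replace (alpha j * n + alpha 0%nat * n - 1) with (n * (alpha j + alpha 0%nat - 1 * / n)) by (field; lra).
    assert (0 < (alpha j + alpha 0%nat) * n - 1) by (replace ((alpha j + alpha 0%nat) * n - 1) with (n * (alpha j + alpha 0%nat - 1 * / n)) by (field; lra); nra).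
    field. repeat split; try lra.
  - apply lim_div. apply lim_const. apply lim_lin. lra.
Qed.

Definition Pc := Rprod (map (fun j => 1 / (1 - alpha j / As K alpha)) (Jl K)).

Lemma lim_Qn : lim (Qn K alpha) Pc.
Proof.
  pose proof A1_pos. pose proof As_pos. pose proof a0_pos. pose proof HAs.
  set (A1 := A1s K alpha) in *. set (A := As K alpha) in *.
  set (Z := Rprod (map (fun j => A - alpha j) (seq 0 K))).
  assert (HZ : 0 < Z) by (apply Rprod_pos; intros j Hj; apply in_seq in Hj; apply As_minus_pos; lia).
  set (c := INR (K - 1)).
  apply (lim_ext (fun n => (A1 - (c - 1) * / n) * Rprod (map (fun i => A - (c - 1 - INR i) * / n) (seq 0 (K - 1))) / Z)).
  - destruct ev_ge1 as [N HN]. exists N. intros n Hn. specialize (HN n Hn).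
    unfold Qn. fold A1 A c.
    rewrite (Rprod_ext (fun i => A1 * n - c + alpha 0%nat * n + 1 + INR i) (fun i => n * (A - (c - 1 - INR i) * / n))).
    2:{ intros. rewrite H2. field. lra. }
    rewrite (Rprod_ext (fun j => A * n - alpha j * n) (fun j => n * (A - alpha j))).
    2:{ intros. ring. }
    rewrite !Rprod_scal, !length_seq. fold Z.
    assert (HnK : n ^ K = n * n ^ (K - 1)) by (replace K with (S (K - 1)) at 1 by lia; reflexivity).
    rewrite HnK. replace (A1 * n - c + 1) with (n * (A1 - (c - 1) * / n)) by (field; lra).
    pose proof (pow_lt n (K - 1) ltac:(lra)). field. repeat split; lra.
  - apply (lim_unique_eq _ (A1 * Rprod (map (fun i => A) (seq 0 (K - 1))) / Z)).
    + apply lim_div; [|apply lim_const|lra]. apply lim_mult. apply lim_lin.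
      apply (lim_prod _ (fun i n => A - (c - 1 - INR i) * / n) (fun _ => A)). intros. apply lim_lin.
    + rewrite Rprod_const, length_seq.
      unfold Pc. fold A.
      rewrite (Rprod_ext _ (fun j => A * / (A - alpha j))).
      2:{ intros j Hj. pose proof (As_minus_pos j ltac:(pose proof (HJ j Hj); lia)). fold A in H3. field. lra. }
      rewrite Rprod_scal, Rprod_inv. unfold Jl at 1. rewrite length_seq.
      unfold Z. rewrite seq0K by lia. unfold Rprod at 1. simpl. fold (Rprod (map (fun j => A - alpha j) (Jl K))).
      replace (A - alpha 0%nat) with A1 by lra.
      assert (0 < Rprod (map (fun j => A - alpha j) (Jl K))).
      { apply Rprod_pos. intros j Hj. apply As_minus_pos. pose proof (HJ j Hj); lia. }
      field. lra.
Qed.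

Lemma lim_minus' f g a b : lim f a -> lim g b -> lim (fun n => f n - g n) (a - b).
Proof. intros. eapply is_lim_minus; eauto. reflexivity. Qed.

Lemma p_lt1 j : In j (Jl K) -> 0 < alpha j / As K alpha < 1.
Proof.
  intro Hj. pose proof (alpha_le j Hj). pose proof As_pos. pose proof HAs. pose proof a0_pos.
  split. apply Rdiv_lt_0_compat; lra.
  apply (Rmult_lt_reg_r (As K alpha)); auto. field_simplify; lra.
Qed.

Lemma lim_LoBn b : lim (LoBn K alpha b) (Rprod (map (fun j => rs (pow (alpha j / As K alpha)) b) (Jl K))).
Proof.
  unfold LoBn. apply (lim_prod _ (fun j n => rs (pow ((alpha j * n - INR b) / (As K alpha * n))) b)).
  intros j Hj. apply lim_rs_pow. pose proof As_pos.
  apply (lim_ext (fun n => alpha j / As K alpha - (INR b / As K alpha) * / n)).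
  - exists 1. intros n Hn. field. lra.
  - apply lim_lin.
Qed.

Lemma lim_UpBn b th v : lim (UpBn K alpha b th v) (Pc + th ^ b * Rprod (map (fun _ => 1 / (1 - v)) (Jl K))).
Proof.
  unfold UpBn. apply lim_plus; [|apply lim_const].
  unfold Pc. apply (lim_prod _ (fun j n => 1 / (1 - xn K alpha b j n))).
  intros j Hj. apply lim_div. apply lim_const. apply lim_minus'. apply lim_const. apply lim_xn; auto.
  pose proof (p_lt1 j Hj). lra.
Qed.
End Lims.


Lemma Rprod_ge1 {A} (f : A -> R) l : (forall a, In a l -> 1 <= f a) -> 1 <= Rprod (map f l).
Proof.
  induction l; intro H; unfold Rprod in *; simpl; [lra|].
  pose proof (H a (or_introl eq_refl)). assert (1 <= fold_right Rmult 1 (map f l)) by (apply IHl; auto with datatypes).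
  nra.
Qed.

Theorem main_aux (K : nat) (alpha : nat -> R)
  (hK : (2 <= K)%nat) (halpha : forall j, (j < K)%nat -> 0 < alpha j) :
  forall eps : R, 0 < eps ->
  exists N : R, forall (n : R) (m : nat -> nat),
    N <= n ->
    (forall j, (j < K)%nat -> (0 < m j)%nat /\ INR (m j) = alpha j * n) ->
    Rabs (B (map m (seq 0 K)) / Bapprox (map m (seq 0 K)) - 1) < eps.
Proof.
  intros eps Heps.
  pose proof (A1_pos K alpha hK halpha) as HA1.
  pose proof (As_pos K alpha hK halpha) as HA.
  pose proof (a0_pos K alpha hK halpha) as Ha0.
  pose proof (HAs K alpha hK) as HAe.
  set (A := As K alpha) in *. set (A1 := A1s K alpha) in *. set (a0 := alpha 0%nat) in *.
  set (J := Jl K).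
  assert (HlenJ : length J = (K - 1)%nat) by (unfold J, Jl; apply length_seq).
  set (ub := 1 - a0 / (2 * A)). set (v := (1 + ub) / 2). set (th := ub / v).
  assert (Hq : 0 < a0 / A < 1).
  { split. apply Rdiv_lt_0_compat; lra. apply (Rmult_lt_reg_r A); auto. field_simplify; lra. }
  assert (Hub : 1/2 < ub < 1).
  { unfold ub. replace (a0 / (2 * A)) with ((a0 / A) / 2) by (field; lra). lra. }
  assert (Hv : 0 <= v < 1) by (unfold v; lra).
  assert (Hth : 0 <= th <= 1 /\ th < 1).
  { unfold th. split; [split|]. apply Rlt_le, Rdiv_lt_0_compat; unfold v; lra.
    apply (Rmult_le_reg_r v). unfold v; lra. field_simplify; unfold v; lra.
    apply (Rmult_lt_reg_r v). unfold v; lra. field_simplify; unfold v; lra. }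
  assert (Hthv : th * v = ub) by (unfold th; field; unfold v; lra).
  set (pbar := 1 - a0 / A).
  set (Cc := Rprod (map (fun _ => 1 / (1 - v)) J)).
  assert (HCc : 0 <= Cc).
  { apply Rprod_nonneg. intros. apply Rlt_le, Rdiv_lt_0_compat; lra. }
  assert (HKpos : 0 < INR K) by (apply lt_0_INR; lia).
  destruct (pow_lt_1_zero pbar ltac:(rewrite Rabs_pos_eq; unfold pbar; lra) (eps / (4 * INR K))
     ltac:(apply Rdiv_lt_0_compat; lra)) as [b1 Hb1].
  destruct (pow_lt_1_zero th ltac:(rewrite Rabs_pos_eq; lra) (eps / (4 * (Cc + 1)))
     ltac:(apply Rdiv_lt_0_compat; lra)) as [b2 Hb2].
  set (b := Nat.max (Nat.max b1 b2) 1).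
  assert (Hb1' : pbar ^ b < eps / (4 * INR K)).
  { specialize (Hb1 b ltac:(unfold b; lia)). rewrite Rabs_pos_eq in Hb1; auto. apply pow_le. unfold pbar; lra. }
  assert (Hb2' : th ^ b < eps / (4 * (Cc + 1))).
  { specialize (Hb2 b ltac:(unfold b; lia)). rewrite Rabs_pos_eq in Hb2; auto. apply pow_le. lra. }
  assert (Hb : (1 <= b)%nat) by (unfold b; lia).
  set (P := Pc K alpha).
  assert (HP1 : 1 <= P).
  { apply Rprod_ge1. intros j Hj. pose proof (p_lt1 K alpha hK halpha j Hj).
    unfold Rdiv at 1. rewrite Rmult_1_l. rewrite <- Rinv_1 at 1. apply Rinv_le_contravar; lra. }
  set (Lb := Rprod (map (fun j => rs (pow (alpha j / A)) b) J)).
  assert (HLb : (1 - eps / 4) * P <= Lb).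
  { apply Rle_trans with ((1 - INR (length J) * pbar ^ b) * P).
    - apply Rmult_le_compat_r; [lra|]. rewrite HlenJ.
      assert (INR (K - 1) <= INR K) by (apply le_INR; lia).
      assert (0 <= pbar ^ b) by (apply pow_le; unfold pbar; lra).
      assert (INR K * pbar ^ b < eps / 4).
      { apply (Rmult_lt_reg_l (/ INR K)). apply Rinv_0_lt_compat; auto.
        replace (/ INR K * (INR K * pbar ^ b)) with (pbar ^ b) by (field; lra).
        replace (/ INR K * (eps / 4)) with (eps / (4 * INR K)) by (field; lra). auto. }
      nra.
    - unfold Lb, P, Pc. fold A. fold J.
      rewrite (Rprod_ext (fun j => rs (pow (alpha j / A)) b) (fun j => (1 - (alpha j / A) ^ b) * (1 / (1 - alpha j / A)))).
      2:{ intros j Hj. pose proof (p_lt1 K alpha hK halpha j Hj). fold A in H. rewrite rs_pow by lra. unfold Rdiv. ring. }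
      apply prod_lower.
      + intros j Hj. pose proof (p_lt1 K alpha hK halpha j Hj). fold A in H.
        pose proof (alpha_le K alpha hK halpha j Hj). fold A1 in H0.
        split; [split|].
        * apply pow_le; lra.
        * apply pow_incr. split; [lra|]. unfold pbar. apply (Rmult_le_reg_r A); auto. field_simplify; lra.
        * apply Rlt_le, Rdiv_lt_0_compat; lra.
      + split. apply pow_le; unfold pbar; lra. apply pow_le_one. unfold pbar; lra. }
  set (Ub := P + th ^ b * Cc).
  assert (HUb : Ub <= (1 + eps / 4) * P).
  { unfold Ub. assert (th ^ b * Cc <= eps / 4).
    { apply Rle_trans with (eps / (4 * (Cc + 1)) * (Cc + 1)).
      - pose proof (pow_le th b (proj1 (proj1 Hth))). nra.
      - right. field. lra. }
    nra. }
  assert (E1 : ev (fun n => LoBn K alpha b n / Qn K alpha n > 1 - eps)).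
  { apply (lim_ev_gt _ (Lb / P)).
    - apply lim_div; [apply lim_LoBn; auto | apply lim_Qn; auto | lra].
    - apply (Rmult_lt_reg_r P). lra. assert (0 < eps * P) by nra. field_simplify; lra. }
  assert (E2 : ev (fun n => UpBn K alpha b th v n / Qn K alpha n < 1 + eps)).
  { apply (lim_ev_lt _ (Ub / P)).
    - apply lim_div; [apply lim_UpBn; auto | apply lim_Qn; auto | lra].
    - apply (Rmult_lt_reg_r P). lra. assert (0 < eps * P) by nra. field_simplify; lra. }
  assert (E3 : ev (fun n => 0 < Qn K alpha n)).
  { apply (lim_ev_gt _ P). apply lim_Qn; auto. lra. }
  assert (E4 : ev (fun n => forall j, In j J -> xn K alpha b j n < 1)).
  { apply ev_forall_list. intros j Hj. apply (lim_ev_lt _ (alpha j / A)).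
    apply lim_xn; auto. apply (p_lt1 K alpha hK halpha j Hj). }
  assert (E5 : ev (fun n => forall j, In j J -> gn alpha j n < ub)).
  { apply ev_forall_list. intros j Hj. apply (lim_ev_lt _ (alpha j / (alpha j + a0))).
    apply (lim_gn K alpha); auto.
    pose proof (alpha_le K alpha hK halpha j Hj). fold A1 in H.
    apply (Rmult_lt_reg_r (alpha j + a0)). lra. unfold ub.
    field_simplify; try lra.
    apply (Rmult_lt_reg_r (2 * A)). lra. field_simplify; try lra. nra. }
  assert (E6 : ev (fun n => forall j, In j J -> INR b <= alpha j * n)).
  { apply ev_forall_list. intros j Hj. pose proof (alpha_le K alpha hK halpha j Hj).
    exists (INR b / alpha j). intros n Hn.
    apply (Rmult_le_compat_l (alpha j)) in Hn; [|lra].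
    replace (alpha j * (INR b / alpha j)) with (INR b) in Hn by (field; lra). lra. }
  assert (E7 : ev (fun n => 1 <= A1 * n - c2 K b)).
  { exists ((1 + c2 K b) / A1). intros n Hn.
    apply (Rmult_le_compat_l A1) in Hn; [|lra].
    replace (A1 * ((1 + c2 K b) / A1)) with (1 + c2 K b) in Hn by (field; lra). lra. }
  destruct (ev_and _ _ E1 (ev_and _ _ E2 (ev_and _ _ E3 (ev_and _ _ E4 (ev_and _ _ E5
     (ev_and _ _ E6 (ev_and _ _ E7 (ev_ge1)))))))) as [N HN].
  exists N. intros n m Hn Hm.
  destruct (HN n Hn) as [F1 [F2 [F3 [F4 [F5 [F6 [F7 F8]]]]]]].
  assert (Hc := conv K alpha b th v n m hK Hb ltac:(lra) Hm F6 F7 F4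
     ltac:(intros j Hj; rewrite Hthv; apply Rlt_le; apply F5; auto) (proj1 Hth) Hv F3).
  apply Rabs_def1; lra.
Qed.


Theorem mainTheorem16 (S : nat) (alpha : nat -> R)
  (hS : (2 <= S)%nat) (halpha : forall j, (j < S)%nat -> 0 < alpha j) :
  forall eps : R, 0 < eps ->
  exists N : R, forall (n : R) (m : nat -> nat),
    N <= n ->
    (forall j, (j < S)%nat -> (0 < m j)%nat /\ INR (m j) = alpha j * n) ->
    Rabs (B (map m (seq 0 S)) / Bapprox (map m (seq 0 S)) - 1) < eps.
Proof.
  exact (main_aux S alpha hS halpha).
Qed.
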